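(* Let $\mathcal{E}$ be an elementary topos with subobject classifier $\Omega$, let $\circledcirc:\Omega\to\Omega$ be a strong Löb operator, and let $f:X\to X$ be $\circledcirc$-contractive. Then $f$ is non-expansive, and hence its subobject of fixed points is a maximal subterminal one, i.e. $\mathcal{E}\models \mathsf{MaxST}(\lambda x{:}X.(x\approx f x))$.
   Context: Statements are in the internal (Mitchell–Bénabou) language of $\mathcal{E}$; $\mathcal{E}\models\phi$ means the closed formula $\phi$ is interpreted as $\mathrm{true}:1\to\Omega$. $\circledcirc$ is a strong Löb operator if $\mathcal{E}\models\forall p{:}\Omega.((\circledcirc p\Rightarrow p)\Rightarrow p)$. $f$ is $\circledcirc$-contractive if $\mathcal{E}\models\forall x,y{:}X.(\circledcirc(x\approx y)\Rightarrow f x\approx f y)$. $f$ is non-expansive if $\mathcal{E}\models\forall x,y{:}X.((f x\approx f y\Rightarrow x\approx y)\Rightarrow x\approx y)$. For $\phi:\Omega^X$: $\mathsf{SubTe}(\phi):=\forall x,y{:}X.(\phi(x)\wedge\phi(y)\Rightarrow x\approx y)$; $\phi\subseteq\psi:=\forall x{:}X.(\phi(x)\Rightarrow\psi(x))$; $\mathsf{MaxST}(\phi):=\mathsf{SubTe}(\phi)\wedge\forall\alpha{:}\Omega^X.(\mathsf{SubTe}(\alpha)\wedge\phi\subseteq\alpha\Rightarrow\alpha\subseteq\phi)$. *)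

(* Defs.v *)
Set Implicit Arguments.
Unset Strict Implicit.

Record Topos := {
  Ob : Type;
  Hom : Ob -> Ob -> Type;
  idm : forall A, Hom A A;
  comp : forall A B C, Hom B C -> Hom A B -> Hom A C;
  comp_assoc : forall A B C D (h : Hom C D) (g : Hom B C) (f : Hom A B),
      comp h (comp g f) = comp (comp h g) f;
  comp_idl : forall A B (f : Hom A B), comp (idm B) f = f;
  comp_idr : forall A B (f : Hom A B), comp f (idm A) = f;
  One : Ob;
  bang : forall A, Hom A One;
  bang_uniq : forall A (f g : Hom A One), f = g;
  Prod : Ob -> Ob -> Ob;
  p1 : forall A B, Hom (Prod A B) A;
  p2 : forall A B, Hom (Prod A B) B;
  pair : forall C A B, Hom C A -> Hom C B -> Hom C (Prod A B);
  pair_p1 : forall C A B (f : Hom C A) (g : Hom C B), comp (p1 A B) (pair f g) = f;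
  pair_p2 : forall C A B (f : Hom C A) (g : Hom C B), comp (p2 A B) (pair f g) = g;
  pair_uniq : forall C A B (h : Hom C (Prod A B)),
      pair (comp (p1 A B) h) (comp (p2 A B) h) = h;
  Eqz : forall A B, Hom A B -> Hom A B -> Ob;
  eqm : forall A B (f g : Hom A B), Hom (Eqz f g) A;
  eqm_comm : forall A B (f g : Hom A B), comp f (eqm f g) = comp g (eqm f g);
  eqm_univ : forall A B (f g : Hom A B) Z (h : Hom Z A),
      comp f h = comp g h -> exists! u : Hom Z (Eqz f g), comp (eqm f g) u = h;
  (* exponentials: Exp A B is B^A *)
  Exp : Ob -> Ob -> Ob;
  ev : forall A B, Hom (Prod (Exp A B) A) B;
  curry : forall C A B, Hom (Prod C A) B -> Hom C (Exp A B);
  curry_beta : forall C A B (h : Hom (Prod C A) B),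
      comp (ev A B) (pair (comp (curry h) (p1 C A)) (p2 C A)) = h;
  curry_eta : forall C A B (g : Hom C (Exp A B)),
      curry (comp (ev A B) (pair (comp g (p1 C A)) (p2 C A))) = g;
  Omega : Ob;
  tru : Hom One Omega;
  chi : forall A B, Hom A B -> Hom B Omega;
  chi_spec : forall A B (m : Hom A B),
      (forall Z (g h : Hom Z A), comp m g = comp m h -> g = h) ->
      comp (chi m) m = comp tru (bang A) /\
      (forall Z (g : Hom Z B), comp (chi m) g = comp tru (bang Z) ->
         exists! h : Hom Z A, comp m h = g);
  chi_uniq : forall A B (m : Hom A B) (c : Hom B Omega),
      (forall Z (g h : Hom Z A), comp m g = comp m h -> g = h) ->
      comp c m = comp tru (bang A) ->
      (forall Z (g : Hom Z B), comp c g = comp tru (bang Z) ->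
         exists! h : Hom Z A, comp m h = g) ->
      c = chi m
}.

Arguments Hom : clear implicits.
Arguments Ob : clear implicits.
Arguments idm {t} A.
Arguments comp {t A B C} _ _.
Arguments One {t}.
Arguments bang {t} A.
Arguments Prod {t} _ _.
Arguments p1 {t} A B.
Arguments p2 {t} A B.
Arguments pair {t C A B} _ _.
Arguments Eqz {t A B} _ _.
Arguments eqm {t A B} _ _.
Arguments Exp {t} _ _.
Arguments ev {t} A B.
Arguments curry {t C A B} _.
Arguments Omega {t}.
Arguments tru {t}.
Arguments chi {t A B} _.

Unset Implicit Arguments.
Section InternalLanguage.
Variable E : Topos.
Local Notation Ω := (@Omega E).

Definition andO : Hom E (Prod Ω Ω) Ω := chi (pair (@tru E) (@tru E)).
Definition impO : Hom E (Prod Ω Ω) Ω := chi (eqm andO (p1 Ω Ω)).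
Definition eqO (X : Ob E) : Hom E (Prod X X) Ω := chi (pair (idm X) (idm X)).
Definition allO (X : Ob E) : Hom E (Exp X Ω) Ω :=
  chi (curry (comp (@tru E) (bang (Prod One X))) : Hom E One (Exp X Ω)).

(* Formulas in context G are morphisms G -> Ω; terms of type X are G -> X. *)
Definition FAnd {G} (a b : Hom E G Ω) : Hom E G Ω := comp andO (pair a b).
Definition FImp {G} (a b : Hom E G Ω) : Hom E G Ω := comp impO (pair a b).
Definition FEq {G X} (a b : Hom E G X) : Hom E G Ω := comp (eqO X) (pair a b).
Definition FAll {G} (X : Ob E) (phi : Hom E (Prod G X) Ω) : Hom E G Ω :=
  comp (allO X) (curry phi).
Definition FLam {G} (X : Ob E) (phi : Hom E (Prod G X) Ω) : Hom E G (Exp X Ω) :=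
  curry phi.
Definition FApp {G X} (phi : Hom E G (Exp X Ω)) (x : Hom E G X) : Hom E G Ω :=
  comp (ev X Ω) (pair phi x).
(* weakening and the last variable *)
Definition wk {G A B} (t : Hom E G B) : Hom E (Prod G A) B := comp t (p1 G A).
Definition vr {G A} : Hom E (Prod G A) A := p2 G A.

Definition models (phi : Hom E One Ω) : Prop := phi = @tru E.

Definition strong_Lob (circ : Hom E Ω Ω) : Prop :=
  models (FAll Ω (FImp (FImp (comp circ vr) vr) vr)).

Definition contractive (circ : Hom E Ω Ω) {X} (f : Hom E X X) : Prop :=
  models (FAll X (FAll X
    (let x := wk (A := X) (vr (G := One) (A := X)) in
     let y := vr (G := Prod One X) (A := X) in
     FImp (comp circ (FEq x y)) (FEq (comp f x) (comp f y))))).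

Definition non_expansive {X} (f : Hom E X X) : Prop :=
  models (FAll X (FAll X
    (let x := wk (A := X) (vr (G := One) (A := X)) in
     let y := vr (G := Prod One X) (A := X) in
     FImp (FImp (FEq (comp f x) (comp f y)) (FEq x y)) (FEq x y)))).

Definition SubTe {G X} (phi : Hom E G (Exp X Ω)) : Hom E G Ω :=
  FAll X (FAll X
    (let x := wk (A := X) (vr (G := G) (A := X)) in
     let y := vr (G := Prod G X) (A := X) in
     let phi' := wk (A := X) (wk (A := X) phi) in
     FImp (FAnd (FApp phi' x) (FApp phi' y)) (FEq x y))).

Definition Incl {G X} (phi psi : Hom E G (Exp X Ω)) : Hom E G Ω :=
  FAll X (FImp (FApp (wk phi) vr) (FApp (wk psi) vr)).

Definition MaxST {G X} (phi : Hom E G (Exp X Ω)) : Hom E G Ω :=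
  FAnd (SubTe phi)
    (FAll (Exp X Ω)
       (let a := vr (G := G) (A := Exp X Ω) in
        let phi' := wk (A := Exp X Ω) phi in
        FImp (FAnd (SubTe a) (Incl phi' a)) (Incl a phi'))).

Definition fixpred {X} (f : Hom E X X) : Hom E One (Exp X Ω) :=
  FLam X (FEq (vr (G := One) (A := X)) (comp f vr)).

End InternalLanguage.
Arguments strong_Lob {E}.
Arguments contractive {E} circ {X}.
Arguments non_expansive {E X}.
Arguments models {E}.
Arguments MaxST {E G X}.
Arguments fixpred {E X}.

(* Main.v *)
Require Import Defs.
From Stdlib Require Import Setoid.

Section S.
Variable E : Topos.
Local Notation Om := (@Omega E).

Definition Tr {G : Ob E} (c : Hom E G Om) : Prop := c = comp tru (bang G).

Lemma bang_comp {A B} (h : Hom E A B) : comp (bang B) h = bang A.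
Proof. apply bang_uniq. Qed.

Lemma Tr_comp {G Z} (c : Hom E G Om) (h : Hom E Z G) : Tr c -> Tr (comp c h).
Proof. unfold Tr; intros ->. rewrite <- comp_assoc, bang_comp. reflexivity. Qed.

Lemma comp_pair {Z C A B} (a : Hom E C A) (b : Hom E C B) (h : Hom E Z C) :
  comp (pair a b) h = pair (comp a h) (comp b h).
Proof.
  rewrite <- (pair_uniq (comp (pair a b) h)).
  rewrite !comp_assoc, pair_p1, pair_p2. reflexivity.
Qed.

Lemma pair_inj {C A B} (a c : Hom E C A) (b d : Hom E C B) :
  pair a b = pair c d -> a = c /\ b = d.
Proof.
  intro H. split.
  - rewrite <- (pair_p1 a b), <- (pair_p1 c d), H; reflexivity.
  - rewrite <- (pair_p2 a b), <- (pair_p2 c d), H; reflexivity.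
Qed.

Definition mono {A B} (m : Hom E A B) :=
  forall Z (g h : Hom E Z A), comp m g = comp m h -> g = h.

Lemma chi_char {A B Z} (m : Hom E A B) (g : Hom E Z B) : mono m ->
  (Tr (comp (chi m) g) <-> exists h, comp m h = g).
Proof.
  intros Hm. destruct (chi_spec Hm) as [H1 H2]. unfold Tr. split.
  - intro H. destruct (H2 _ _ H) as [h [Hh _]]. eauto.
  - intros [h <-]. rewrite comp_assoc, H1, <- comp_assoc, bang_comp. reflexivity.
Qed.

Lemma mono_one {B} (m : Hom E One B) : mono m.
Proof. intros Z g h _. apply bang_uniq. Qed.

Lemma mono_eqm {A B} (f g : Hom E A B) : mono (eqm f g).
Proof.
  intros Z u v H.
  assert (Hc : comp f (comp (eqm f g) u) = comp g (comp (eqm f g) u)).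
  { rewrite !comp_assoc, eqm_comm. reflexivity. }
  destruct (eqm_univ Hc) as [w [_ Hw]].
  transitivity w; [symmetry|]; apply Hw; auto.
Qed.

Lemma mono_diag X : mono (pair (idm X) (idm X)).
Proof.
  intros Z u v H. rewrite !comp_pair, !comp_idl in H. apply pair_inj in H. tauto.
Qed.

Lemma Ext {G} (c d : Hom E G Om) :
  (forall Z (g : Hom E Z G), Tr (comp c g) <-> Tr (comp d g)) -> c = d.
Proof.
  intros H.
  set (m := eqm d (comp tru (bang G))).
  assert (Hd : Tr (comp d m)).
  { unfold Tr, m. rewrite eqm_comm, <- comp_assoc, bang_comp. reflexivity. }
  assert (Key : forall c', (forall Z (g : Hom E Z G), Tr (comp c' g) <-> Tr (comp d g)) -> c' = chi m).
  { intros c' Hc'. apply chi_uniq.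
    - apply mono_eqm.
    - apply Hc'. exact Hd.
    - intros Z g Hg. apply Hc' in Hg. unfold Tr in Hg.
      apply eqm_univ. rewrite Hg, <- comp_assoc, bang_comp. reflexivity. }
  rewrite (Key c H), (Key d (fun Z g => iff_refl _)). reflexivity.
Qed.

Lemma TrA {G} (a b : Hom E G Om) : Tr (FAnd E a b) <-> Tr a /\ Tr b.
Proof.
  unfold FAnd, andO. rewrite chi_char by apply mono_one. split.
  - intros [h Hh]. rewrite comp_pair in Hh. apply pair_inj in Hh as [<- <-].
    unfold Tr; rewrite (bang_uniq h (bang G)). tauto.
  - intros [Ha Hb]. exists (bang G). rewrite comp_pair. unfold Tr in *. congruence.
Qed.

Lemma TrE {G X} (a b : Hom E G X) : Tr (FEq E a b) <-> a = b.
Proof.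
  unfold FEq, eqO. rewrite chi_char by apply mono_diag. split.
  - intros [h Hh]. rewrite comp_pair, comp_idl in Hh. apply pair_inj in Hh as [<- <-]. reflexivity.
  - intros <-. exists a. rewrite comp_pair, comp_idl. reflexivity.
Qed.

Lemma curry_nat {G Z X B} (k : Hom E (Prod G X) B) (h : Hom E Z G) :
  comp (curry k) h = curry (comp k (pair (comp h (p1 Z X)) (p2 Z X))).
Proof.
  rewrite <- (curry_eta (comp (curry k) h)). f_equal.
  pattern k at 2. rewrite <- (curry_beta k).
  rewrite <- !comp_assoc, comp_pair, pair_p2, <- comp_assoc, pair_p1. reflexivity.
Qed.

Lemma curry_inj {G X B} (k1 k2 : Hom E (Prod G X) B) : curry k1 = curry k2 -> k1 = k2.
Proof. intro H. rewrite <- (curry_beta k1), <- (curry_beta k2), H. reflexivity. Qed.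

Lemma TrAll {G} X (phi : Hom E (Prod G X) Om) : Tr (FAll E X phi) <-> Tr phi.
Proof.
  unfold FAll, allO. rewrite chi_char by apply mono_one. split.
  - intros [h Hh]. rewrite curry_nat in Hh. apply curry_inj in Hh. rewrite <- Hh.
    unfold Tr. rewrite <- comp_assoc, bang_comp. reflexivity.
  - intro H. exists (bang G). rewrite curry_nat. f_equal. rewrite H.
    rewrite <- comp_assoc, bang_comp. reflexivity.
Qed.

Lemma cA {G Z} (a b : Hom E G Om) (h : Hom E Z G) :
  comp (FAnd E a b) h = FAnd E (comp a h) (comp b h).
Proof. unfold FAnd. rewrite <- comp_assoc, comp_pair. reflexivity. Qed.
Lemma cI {G Z} (a b : Hom E G Om) (h : Hom E Z G) :
  comp (FImp E a b) h = FImp E (comp a h) (comp b h).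
Proof. unfold FImp. rewrite <- comp_assoc, comp_pair. reflexivity. Qed.
Lemma cE {G Z X} (a b : Hom E G X) (h : Hom E Z G) :
  comp (FEq E a b) h = FEq E (comp a h) (comp b h).
Proof. unfold FEq. rewrite <- comp_assoc, comp_pair. reflexivity. Qed.
Lemma cApp {G Z X} (p : Hom E G (Exp X Om)) (a : Hom E G X) (h : Hom E Z G) :
  comp (FApp E p a) h = FApp E (comp p h) (comp a h).
Proof. unfold FApp. rewrite <- comp_assoc, comp_pair. reflexivity. Qed.
Lemma cAll {G Z} X (phi : Hom E (Prod G X) Om) (h : Hom E Z G) :
  comp (FAll E X phi) h = FAll E X (comp phi (pair (comp h (p1 Z X)) (p2 Z X))).
Proof. unfold FAll. rewrite <- comp_assoc, curry_nat. reflexivity. Qed.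
Lemma beta {G Z X} (psi : Hom E (Prod G X) Om) (g : Hom E Z G) (x : Hom E Z X) :
  FApp E (comp (curry psi) g) x = comp psi (pair g x).
Proof.
  unfold FApp. rewrite <- (curry_beta psi) at 2.
  rewrite <- comp_assoc, comp_pair, <- comp_assoc, pair_p1, pair_p2. reflexivity.
Qed.

Lemma TrI {G} (a b : Hom E G Om) :
  Tr (FImp E a b) <-> forall Z (h : Hom E Z G), Tr (comp a h) -> Tr (comp b h).
Proof.
  assert (step : Tr (FImp E a b) <-> FAnd E a b = a).
  { unfold FImp, impO. rewrite chi_char by apply mono_eqm. split.
    - intros [h Hh]. rewrite <- (pair_p1 a b) at 2. unfold FAnd.
      rewrite <- Hh, !comp_assoc, eqm_comm. reflexivity.
    - intro H. assert (H' : comp (andO E) (pair a b) = comp (p1 Om Om) (pair a b))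
        by (rewrite pair_p1; exact H).
      destruct (eqm_univ H') as [u [Hu _]]. eauto. }
  rewrite step. split.
  - intros H Z h Ha. rewrite <- H, cA in Ha. apply TrA in Ha. tauto.
  - intros H. apply Ext. intros Z g. rewrite cA, TrA. split; [tauto|].
    intro Ha. split; auto.
Qed.

End S.
Arguments Tr {E G}.
Arguments TrI {E G}.
Arguments TrE {E G X}.
Arguments TrA {E G}.
Arguments TrAll {E G}.
Arguments Tr_comp {E G Z}.

Lemma comp_assoc_r (E : Topos) (A B C D : Ob E) (h : Hom E C D) (g : Hom E B C) (f : Hom E A B) :
  comp (comp h g) f = comp h (comp g f).
Proof. symmetry; apply comp_assoc. Qed.

Global Hint Rewrite comp_assoc_r comp_pair pair_p1 pair_p2 comp_idl comp_idr cA cI cE cApp cAll beta bang_comp : tdb.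
Ltac simp := unfold MaxST, SubTe, Incl, fixpred, FLam, wk, vr in *; autorewrite with tdb in *.

Lemma models_Tr (E : Topos) (phi : Hom E One Omega) : models phi <-> Tr phi.
Proof. unfold models, Tr. rewrite (bang_uniq (bang One) (idm One)), comp_idr. tauto. Qed.

Section M.
Variable E : Topos.
Variable circ : Hom E (@Omega E) (@Omega E).
Variable X : Ob E.
Variable f : Hom E X X.

Lemma lob_ext : strong_Lob circ -> forall Z (p : Hom E Z Omega),
  (forall W (k : Hom E W Z), Tr (comp circ (comp p k)) -> Tr (comp p k)) -> Tr p.
Proof.
  unfold strong_Lob. rewrite models_Tr, TrAll. intros H Z p Hp.
  apply (Tr_comp _ (pair (bang Z) p)) in H. simp.
  rewrite TrI in H. specialize (H Z (idm Z)). simp. apply H.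
  rewrite TrI. intros W k. simp. apply Hp.
Qed.

Lemma contr_ext : contractive circ f -> forall Z (x y : Hom E Z X),
  Tr (comp circ (FEq E x y)) -> comp f x = comp f y.
Proof.
  unfold contractive. rewrite models_Tr, !TrAll. intros H Z x y Hc.
  apply (Tr_comp _ (pair (pair (bang Z) x) y)) in H. simp.
  rewrite TrI in H. specialize (H Z (idm Z)). simp.
  apply TrE. apply H. exact Hc.
Qed.

Lemma ne_ext : strong_Lob circ -> contractive circ f -> forall Z (x y : Hom E Z X),
  (forall W (k : Hom E W Z), comp f (comp x k) = comp f (comp y k) -> comp x k = comp y k) ->
  x = y.
Proof.
  intros HL HC Z x y H. apply TrE. apply (lob_ext HL). intros W k Hk. simp.
  apply TrE. apply H. apply (contr_ext HC). exact Hk.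
Qed.

Lemma ne : strong_Lob circ -> contractive circ f -> non_expansive f.
Proof.
  intros HL HC. unfold non_expansive. rewrite models_Tr, !TrAll. simp.
  rewrite TrI. intros Z h Hh. simp. rewrite TrE. apply (ne_ext HL HC).
  intros W k Hk. rewrite TrI in Hh. specialize (Hh W k). simp.
  rewrite !TrE in Hh. apply Hh. exact Hk.
Qed.
End M.
Lemma maxst (E : Topos) circ X (f : Hom E X X) : strong_Lob circ -> contractive circ f -> models (MaxST (fixpred f)).
Proof.
  intros HL HC. pose proof (ne_ext E circ X f HL HC) as NE.
  rewrite models_Tr. simp. rewrite TrA. split.
  - rewrite !TrAll, TrI. intros Z h Hh. simp. rewrite TrA, !TrE in Hh. rewrite TrE.
    destruct Hh as [Hx Hy].
    revert Hx Hy. generalize (comp (p2 One X) (comp (p1 (Prod One X) X) h)) (comp (p2 (Prod One X) X) h).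
    intros x y Hx Hy. apply NE. intros W k Hk.
    assert (Ex : comp x k = comp f (comp x k)) by (rewrite comp_assoc, <- Hx; reflexivity).
    assert (Ey : comp y k = comp f (comp y k)) by (rewrite comp_assoc, <- Hy; reflexivity).
    congruence.
  - rewrite !TrAll, TrI. intros Z h Hh. simp.
    apply TrA in Hh. destruct Hh as [Sub Inc]. rewrite !TrAll in Sub. rewrite TrAll in Inc.
    rewrite TrAll, TrI. intros W k Hk. simp. rewrite TrE.
    apply NE. intros V m Hm.
    pose proof (Tr_comp _ (pair (comp (p1 Z X) (comp k m)) (comp f (comp (p2 Z X) (comp k m)))) Inc) as I1. simp.
    rewrite TrI in I1. specialize (I1 _ (idm _)). simp.
    rewrite TrE in I1. specialize (I1 Hm).
    pose proof (Tr_comp _ (pair (pair (comp (p1 Z X) (comp k m)) (comp (p2 Z X) (comp k m))) (comp f (comp (p2 Z X) (comp k m)))) Sub) as S1. simp.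
    rewrite TrI in S1. specialize (S1 _ (idm _)). simp.
    rewrite TrE in S1. try rewrite comp_assoc_r. apply S1. apply TrA. split; [|exact I1].
    apply (Tr_comp _ m) in Hk. simp. exact Hk.
Qed.

Theorem corollary5p11 (E : Topos) (circ : Hom E (@Omega E) (@Omega E))
  (X : Ob E) (f : Hom E X X) :
  strong_Lob circ -> contractive circ f ->
  non_expansive f /\ models (MaxST (fixpred f)).
Proof.
  intros HL HC. split.
  - exact (ne E circ X f HL HC).
  - exact (maxst E circ X f HL HC).
Qed.
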